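(* Let $A,B\in\mathcal{B}(\mathcal{H})$. Then for every $n\in\mathbb{N}$, \begin{equation*} w\left(\begin{bmatrix} 0 &A \\ B& 0 \end{bmatrix}\right)\geq \sqrt[2n]{\max\{w((AB)^n),w((BA)^n)\}}. \end{equation*}
   Context: $\mathcal{H}$ is a complex Hilbert space and $\mathcal{B}(\mathcal{H})$ is the $C^*$-algebra of all bounded linear operators on $\mathcal{H}$. For $T\in\mathcal{B}(\mathcal{H})$, $w(T)=\sup\{|\langle Tx,x\rangle|:\|x\|=1\}$ is the numerical radius. A $2\times 2$ operator matrix with entries in $\mathcal{B}(\mathcal{H})$ is regarded as an operator on $\mathcal{H}\oplus\mathcal{H}$. *)

(* Defs.v *)
From HB Require Import structures.
From mathcomp Require Import all_boot all_order all_algebra.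
From mathcomp Require Import complex.
From mathcomp Require Import classical_sets boolp reals exp.
Set Implicit Arguments. Unset Strict Implicit. Unset Printing Implicit Defensive.
Import Order.TTheory GRing.Theory Num.Theory.
Local Open Scope ring_scope.
Local Open Scope classical_set_scope.

Definition inner_product (R : realType) (H : lmodType R[i]) (ip : H -> H -> R[i]) : Prop :=
  [/\ forall (a : R[i]) (x y z : H), ip (a *: x + y) z = a * ip x z + ip y z,
      forall x y : H, ip y x = conjc (ip x y),
      forall x : H, 0 <= complex.Re (ip x x)
    & forall x : H, ip x x = 0 -> x = 0].

Definition hnorm (R : realType) (V : Type) (ip : V -> V -> R[i]) (x : V) : R :=
  Num.sqrt (complex.Re (ip x x)).

Definition complete_ip (R : realType) (H : lmodType R[i]) (ip : H -> H -> R[i]) : Prop :=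
  forall u : nat -> H,
    (forall e : R, 0 < e -> exists N : nat, forall m n : nat,
        (N <= m)%N -> (N <= n)%N -> hnorm ip (u m - u n) < e) ->
    exists x : H, forall e : R, 0 < e -> exists N : nat, forall n : nat,
        (N <= n)%N -> hnorm ip (u n - x) < e.

Definition bounded_op (R : realType) (H : lmodType R[i]) (ip : H -> H -> R[i])
  (T : H -> H) : Prop :=
  (forall (a : R[i]) (x y : H), T (a *: x + y) = a *: T x + T y) /\
  exists M : R, forall x : H, hnorm ip (T x) <= M * hnorm ip x.

Definition numrad (R : realType) (V : Type) (ip : V -> V -> R[i]) (T : V -> V) : R :=
  sup [set ComplexField.Normc.normc (ip (T x) x) | x in [set x | hnorm ip x = 1]].

Definition ip2 (R : realType) (H : Type) (ip : H -> H -> R[i])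
  (p q : H * H) : R[i] := ip p.1 q.1 + ip p.2 q.2.

(* the operator matrix [[0, A], [B, 0]] acting on H ⊕ H: (x, y) ↦ (A y, B x) *)
Definition offdiag (H : Type) (A B : H -> H) (p : H * H) : H * H := (A p.2, B p.1).

(* Main.v *)
Require Import Defs.
From HB Require Import structures.
From mathcomp Require Import all_boot all_order all_algebra.
From mathcomp Require Import complex.
From mathcomp Require Import classical_sets boolp reals exp.
From mathcomp Require Import separable cyclotomic cyclic ring lra.
Set Implicit Arguments. Unset Strict Implicit. Unset Printing Implicit Defensive.
Import Order.TTheory GRing.Theory Num.Theory.
Local Open Scope ring_scope.

Lemma prim_root_ex (C : numClosedFieldType) n : (n > 0)%N -> {z : C | n.-primitive_root z}.
Proof.
pose p : {poly C} := 'X^n - 1; have [r Dp] := closed_field_poly_normal p.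
move=> n_gt0; apply/sigW; rewrite (monicP _) ?monicXnsubC // scale1r in Dp.
have rn1: all n.-unity_root r by apply/allP=> z; rewrite -root_prod_XsubC -Dp.
have sz_r: (n < (size r).+1)%N.
  by rewrite -(size_prod_XsubC r id) -Dp size_XnsubC.
have [|z] := hasP (has_prim_root n_gt0 rn1 _ sz_r); last by exists z.
by rewrite -separable_prod_XsubC -Dp separable_Xn_sub_1 // pnatr_eq0 -lt0n.
Qed.

Lemma prim_sum0 (C : numClosedFieldType) k (w : C) m :
  k.-primitive_root w -> (0 < m)%N -> (m < k)%N -> \sum_(j < k) (w ^+ m) ^+ j = 0.
Proof.
move=> wp m0 mk.
have h := subrX1 (w ^+ m) k.
have e : (w ^+ m) ^+ k = 1.
  by rewrite -exprM mulnC exprM (prim_expr_order wp) expr1n.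
rewrite e subrr in h.
move/esym/eqP: h; rewrite mulf_eq0 => /orP[|/eqP //].
rewrite subr_eq0 -(prim_order_dvd wp) => /dvdn_leq => /(_ m0).
by rewrite leqNgt mk.
Qed.

Section IP.
Variable C : numClosedFieldType.
Variable V : lmodType C.
Variable ip : V -> V -> C.
Hypothesis iplin : forall a x y z, ip (a *: x + y) z = a * ip x z + ip y z.
Hypothesis ipsym : forall x y, ip y x = (ip x y)^*.
Hypothesis ippos : forall x, 0 <= ip x x.

Lemma ip0l z : ip 0 z = 0.
Proof.
have h := iplin 1 0 0 z; rewrite scaler0 add0r mul1r in h.
by have := congr1 (fun t => t - ip 0 z) h; rewrite addrK subrr.
Qed.

Lemma ipDl x y z : ip (x + y) z = ip x z + ip y z.
Proof. by have := iplin 1 x y z; rewrite scale1r mul1r. Qed.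

Lemma ipZl a x z : ip (a *: x) z = a * ip x z.
Proof. by have := iplin a x 0 z; rewrite addr0 ip0l addr0. Qed.

Lemma ipNl x z : ip (- x) z = - ip x z.
Proof. by rewrite -scaleN1r ipZl mulN1r. Qed.

Lemma ipBl x y z : ip (x - y) z = ip x z - ip y z.
Proof. by rewrite ipDl ipNl. Qed.

Lemma ip_suml I (r : seq I) (P : pred I) (F : I -> V) z :
  ip (\sum_(i <- r | P i) F i) z = \sum_(i <- r | P i) ip (F i) z.
Proof. exact: (big_morph (fun v => ip v z) (fun x y => ipDl x y z) (ip0l z)). Qed.

Lemma ipreal x : ip x x \is Num.real.
Proof. exact: ger0_real. Qed.

Lemma ipRe x : 'Re (ip x x) = ip x x.
Proof. by apply/Creal_ReP/ipreal. Qed.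

Lemma ipDr x y z : ip z (x + y) = ip z x + ip z y.
Proof. by rewrite ipsym ipDl rmorphD /= -!ipsym. Qed.

Lemma ipZr a x z : ip z (a *: x) = a^* * ip z x.
Proof. by rewrite ipsym ipZl rmorphM /= -ipsym. Qed.

Lemma ipBr x y z : ip z (x - y) = ip z x - ip z y.
Proof. by rewrite ipDr -scaleN1r ipZr rmorphN1 mulN1r. Qed.

Lemma amgm u v : `|ip u v| *+ 2 <= ip u u + ip v v.
Proof.
set c := ip u v.
have [->|c0] := eqVneq c 0.
  by rewrite normr0 mul0rn addr_ge0.
have cn0 : `|c| != 0 by rewrite normr_eq0.
set a := c / `|c|.
have e1 : a^* * c = `|c|.
  by rewrite /a fmorph_div /= conj_normC mulrAC -normCKC expr2 mulfK.
have e2 : a * (ip v u) = `|c|.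
  by rewrite ipsym -/c /a mulrAC -normCK expr2 mulfK.
have e3 : a * a^* = 1.
  by rewrite -normCK /a normrM normfV normr_id divff // expr1n.
have := ippos (u - a *: v).
rewrite !ipBl !ipBr !ipZl !ipZr -/c e1 e2 mulrA e3 mul1r.
have -> : ip u u - `|c| - (`|c| - ip v v) = ip u u + ip v v - `|c| *+ 2.
  by ring.
by rewrite subr_ge0.
Qed.

Variable T : V -> V.
Hypothesis Tlin : forall a x y, T (a *: x + y) = a *: T x + T y.

Lemma T0 : T 0 = 0.
Proof.
have h := Tlin 1 0 0; rewrite scaler0 add0r scale1r in h.
by have := congr1 (fun t => t - T 0) h; rewrite addrK subrr.
Qed.

Lemma TD x y : T (x + y) = T x + T y.
Proof. by have := Tlin 1 x y; rewrite !scale1r. Qed.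

Lemma TZ a x : T (a *: x) = a *: T x.
Proof. by have := Tlin a x 0; rewrite !addr0 T0 addr0. Qed.

Lemma T_sum I (r : seq I) (P : pred I) (F : I -> V) :
  T (\sum_(i <- r | P i) F i) = \sum_(i <- r | P i) T (F i).
Proof. exact: (big_morph T TD T0). Qed.


Lemma tele (F : nat -> V) n :
  \sum_(m < n) F m - \sum_(m < n) F m.+1 = F 0%N - F n.
Proof.
elim: n => [|n IH]; first by rewrite !big_ord0 !subrr.
by rewrite !big_ord_recr /= opprD addrACA IH addrA subrK.
Qed.

Lemma re_step (W : C) (zeta : C) y :
  (forall y, `|ip (T y) y| <= W * ip y y) -> `|zeta| * W = 1 ->
  0 <= 'Re (ip (y - zeta *: T y) y).
Proof.
move=> hW hz.
rewrite ipBl ipZl raddfB /= ipRe subr_ge0.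
apply: (le_trans (leif_Re_Creal _).1).
rewrite normrM -[X in _ <= X](mul1r (ip y y)) -hz -mulrA.
by apply: ler_wpM2l => //; apply: hW.
Qed.

Lemma power_ineq (W : C) (k : nat) x : 0 < W ->
  (forall y, `|ip (T y) y| <= W * ip y y) -> (0 < k)%N ->
  `|ip (iter k T x) x| <= W ^+ k * ip x x.
Proof.
move=> W0 hW k0.
set c := ip (iter k T x) x.
have [->|c0] := eqVneq c 0.
  by rewrite normr0 mulr_ge0 // exprn_ge0 // ltW.
have [w wp] := prim_root_ex C k0.
have wk : w ^+ k = 1 := prim_expr_order wp.
have wn : `|w| = 1.
  by apply/eqP; rewrite -(pexpr_eq1 k0) ?normr_ge0 // -normrX wk normr1.
have cn0 : `|c| != 0 by rewrite normr_eq0.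
set u := c^* / `|c|.
have un : `|u| = 1 by rewrite normrM normfV norm_conjC normr_id divff.
set z := k.-root u / W.
have zn : `|z| * W = 1.
  by rewrite normrM normfV norm_rootC un rootC1 // mul1r (gtr0_norm W0) mulVf // gt_eqF.
have zk : z ^+ k * c = `|c| / W ^+ k.
  rewrite expr_div_n rootCK // /u.
  have e : c^* * c = `|c| * `|c| by rewrite -expr2 normCKC.
  by rewrite mulrAC [_ / `|c| * c]mulrAC e mulfK.
pose zeta (j : nat) := w ^+ j * z.
have zetan j : `|zeta j| * W = 1 by rewrite normrM normrX wn expr1n mul1r.
pose y (j : nat) := \sum_(m < k) (zeta j ^+ m) *: iter m T x.
have F1 j : y j - zeta j *: T (y j) = x - z ^+ k *: iter k T x.
  have -> : T (y j) = \sum_(m < k) (zeta j ^+ m) *: iter m.+1 T x.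
    by rewrite /y T_sum; apply: eq_bigr => m _; rewrite TZ.
  rewrite /y scaler_sumr.
  under [X in _ - X = _]eq_bigr do rewrite scalerA -exprS.
  rewrite (tele (fun m => zeta j ^+ m *: iter m T x)) expr0 scale1r /=.
  by rewrite /zeta exprMn -exprM mulnC exprM wk expr1n mul1r.
have F2 : \sum_(j < k) y j = k%:R *: x.
  rewrite /y exchange_big /=.
  under eq_bigr do rewrite -scaler_suml.
  have S m : (0 < m)%N -> (m < k)%N -> \sum_(j < k) zeta j ^+ m = 0.
    move=> m0 mk.
    under eq_bigr do rewrite /zeta exprMn -exprM mulnC exprM.
    by rewrite -mulr_suml (prim_sum0 wp m0 mk) mul0r.
  have [k' ek] : exists k', k = k'.+1 by exists k.-1; rewrite prednK.
  move: S; rewrite ek => S.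
  rewrite big_ord_recl [X in _ + X]big1 ?addr0; last first.
    by move=> i _; rewrite S ?scale0r // /bump /= add1n ltnS ltn_ord.
  by under eq_bigr do rewrite expr0; rewrite sumr_const card_ord.
have key : k%:R * ip (x - z ^+ k *: iter k T x) x =
    \sum_(j < k) ip (y j - zeta j *: T (y j)) (y j).
  under [RHS]eq_bigr do rewrite F1 ipsym.
  by rewrite -rmorph_sum -ip_suml F2 ipZl rmorphM rmorph_nat (ipsym x).

have : 0 <= 'Re (k%:R * ip (x - z ^+ k *: iter k T x) x).
  by rewrite key raddf_sum; apply: sumr_ge0 => j _; apply: re_step.
rewrite ipBl ipZl -/c zk.
have hr : k%:R * (ip x x - `|c| / W ^+ k) \is Num.real.
  apply: rpredM; first exact: realn.
  apply: rpredB; first exact: ipreal.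
  apply: rpredM; first exact: normr_real.
  by rewrite rpredV rpredX // gtr0_real.
rewrite (Creal_ReP _ hr) pmulr_rge0 ?ltr0n // subr_ge0 ler_pdivrMr ?exprn_gt0 //.
by rewrite mulrC.
Qed.

End IP.

Section Gen2.
Variable C : numClosedFieldType.
Variable V : lmodType C.
Variable ip : V -> V -> C.
Hypothesis iplin : forall a x y z, ip (a *: x + y) z = a * ip x z + ip y z.
Hypothesis ipsym : forall x y, ip y x = (ip x y)^*.
Hypothesis ippos : forall x, 0 <= ip x x.
Hypothesis ipdef : forall x, ip x x = 0 -> x = 0.
Variable T : V -> V.
Hypothesis Tlin : forall a x y, T (a *: x + y) = a *: T x + T y.

Lemma unit_to_all (W : C) : 0 <= W ->
  (forall q, ip q q = 1 -> `|ip (T q) q| <= W) ->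
  forall p, `|ip (T p) p| <= W * ip p p.
Proof.
move=> W0 h p.
have [e|ne] := eqVneq (ip p p) 0.
  by rewrite (ipdef e) (T0 Tlin) (ip0l iplin) normr0 mulr_ge0.
have pp : 0 < ip p p by rewrite lt_def ne ippos.
set s := sqrtC (ip p p).
have s0 : 0 < s by rewrite sqrtC_gt0.
have sJ : (s^-1)^* = s^-1 by rewrite geC0_conj // invr_ge0 ltW.
have ss : s * s = ip p p by rewrite -expr2 sqrtCK.
have hq : ip (s^-1 *: p) (s^-1 *: p) = 1.
  rewrite (ipZl iplin) (ipZr iplin ipsym) sJ mulrA -invfM ss mulVf //.
have := h _ hq.
rewrite (TZ Tlin) (ipZl iplin) (ipZr iplin ipsym) sJ mulrA -invfM ss.
rewrite normrM normfV (gtr0_norm pp) ler_pdivrMl //.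
by rewrite mulrC.
Qed.

End Gen2.

Local Open Scope classical_set_scope.
Local Open Scope complex_scope.
Local Open Scope ring_scope.

Lemma sup_bnd (R : realType) (E : set R) b : 0 <= b ->
  (forall x, E x -> 0 <= x /\ x <= b) -> 0 <= sup E /\ sup E <= b.
Proof.
move=> b0 hE; have [[x Ex]|ne] := pselect (E !=set0).
  have hs : has_sup E by split; [exists x | exists b => y /hE[]].
  split; first by apply: le_trans (hE x Ex).1 _; apply: (sup_upper_bound hs).
  by apply: ge_sup; [exists x | move=> y /hE[]].
have -> : E = set0 by apply/seteqP; split=> y // Ey; apply: ne; exists y.
by rewrite sup0.
Qed.

Lemma sup_ge (R : realType) (E : set R) b x :
  (forall y, E y -> y <= b) -> E x -> x <= sup E.
Proof.
move=> hE Ex; have hs : has_sup E by split; [exists x | exists b].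
by apply: (sup_upper_bound hs).
Qed.

Lemma aux (R : realType) (x : R) : 0 < x -> x * (x + 1) <= x -> False.
Proof. move=> h1 h2; nra. Qed.

Section Concrete.
Variable R : realType.

Lemma conjcE (x : R[i]) : conjc x = x^*.
Proof.
have [->|x0] := eqVneq x 0; first by rewrite conjc0 rmorph0.
by apply: (mulfI x0); rewrite -sqr_normc normCK.
Qed.

Lemma normcE' (z : R[i]) : `|z| = (ComplexField.Normc.normc z)%:C.
Proof. by case: z => a b; rewrite normc_def. Qed.

Lemma normc_ge0 (z : R[i]) : 0 <= ComplexField.Normc.normc z.
Proof. by case: z => a b /=; rewrite sqrtr_ge0. Qed.


Variable H : lmodType R[i].
Variable ip : H -> H -> R[i].
Hypothesis hip : inner_product ip.

Lemma hlin : forall a x y z, ip (a *: x + y) z = a * ip x z + ip y z.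
Proof. by case: hip. Qed.

Lemma hsym : forall x y, ip y x = (ip x y)^*.
Proof. by case: hip => _ h _ _ x y; rewrite h conjcE. Qed.

Lemma hIm x : complex.Im (ip x x) = 0.
Proof.
case: hip => _ h _ _; have := h x x.
case: (ip x x) => a b /= [] e; lra.
Qed.

Lemma hpos x : 0 <= ip x x.
Proof.
case: hip => _ _ h _; rewrite lecE /= hIm eqxx /=; exact: h.
Qed.

Lemma hdef x : ip x x = 0 -> x = 0.
Proof. by case: hip => _ _ _ h; apply: h. Qed.

Lemma ipxx x : ip x x = ((hnorm ip x) ^+ 2)%:C.
Proof.
rewrite /hnorm sqr_sqrtr; last by case: hip => _ _ h _; exact: h.
by have := hIm x; case: (ip x x) => a b /= ->.
Qed.

Definition P := (H * H)%type.

Lemma hlin2 : forall a (x y z : P), ip2 ip (a *: x + y) z = a * ip2 ip x z + ip2 ip y z.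
Proof. by move=> a x y z; rewrite /ip2 /= !hlin; ring. Qed.

Lemma hsym2 : forall x y : P, ip2 ip y x = (ip2 ip x y)^*.
Proof. by move=> x y; rewrite /ip2 rmorphD /= -!hsym. Qed.

Lemma hpos2 (x : P) : 0 <= ip2 ip x x.
Proof. by rewrite /ip2 addr_ge0 ?hpos. Qed.

Lemma hdef2 (x : P) : ip2 ip x x = 0 -> x = 0.
Proof.
case: x => x1 x2; rewrite /ip2 /= => /eqP; rewrite paddr_eq0 ?hpos //.
by case/andP => /eqP/hdef -> /eqP/hdef ->.
Qed.

End Concrete.

Unset Implicit Arguments.

Theorem theorem4p7 (R : realType) (H : lmodType R[i]) (ip : H -> H -> R[i])
  (hip : inner_product ip) (hcomplete : complete_ip ip)
  (A B : H -> H) (hA : bounded_op ip A) (hB : bounded_op ip B)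
  (n : nat) (hn : (0 < n)%N) :
  (Num.max (numrad ip (iter n (A \o B))) (numrad ip (iter n (B \o A))))
      `^ ((2 * n)%:R^-1) <= numrad (ip2 ip) (offdiag A B).
Proof.
have [hAlin [MA hMA]] := hA; have [hBlin [MB hMB]] := hB.
set TT := offdiag A B.
have TTlin : forall a (x y : P H), TT (a *: x + y) = a *: TT x + TT y.
  by move=> a [x1 x2] [y1 y2]; rewrite /TT /offdiag /= hAlin hBlin.
have A0 : A 0 = 0 := T0 hAlin.
have B0 : B 0 = 0 := T0 hBlin.
have hn0 : forall x, 0 <= hnorm ip x by move=> x; apply: sqrtr_ge0.
have hAsq : forall x, hnorm ip (A x) ^+ 2 <= MA ^+ 2 * hnorm ip x ^+ 2.
  move=> x; have := hMA x; have := hn0 (A x); have := hn0 x; nra.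
have hBsq : forall x, hnorm ip (B x) ^+ 2 <= MB ^+ 2 * hnorm ip x ^+ 2.
  move=> x; have := hMB x; have := hn0 (B x); have := hn0 x; nra.
set K := MA ^+ 2 + MB ^+ 2 + 1.
have STb : forall p : P H, hnorm (ip2 ip) p = 1 ->
    ComplexField.Normc.normc (ip2 ip (TT p) p) <= K.
  move=> [p1 p2] hp.
  have e2 : hnorm ip p1 ^+ 2 + hnorm ip p2 ^+ 2 = 1.
    move: hp; rewrite {1}/hnorm /ip2 /= !(ipxx hip) /= => h.
    by rewrite -(sqr_sqrtr (addr_ge0 (sqr_ge0 _) (sqr_ge0 _))) h expr1n.
  have := amgm (hlin2 hip) (hsym2 hip) (hpos2 hip) (TT (p1, p2)) (p1, p2).
  rewrite /ip2 /TT /offdiag /= !(ipxx hip) normcE' lecE => /andP[_] /=.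
  rewrite e2 /K => h.
  have := hAsq p2; have := hBsq p1.
  have := sqr_ge0 (hnorm ip p1); have := sqr_ge0 (hnorm ip p2).
  have := sqr_ge0 MA; have := sqr_ge0 MB; nra.
set W := numrad (ip2 ip) TT.
have K0 : 0 <= K by rewrite /K addr_ge0 ?addr_ge0 ?sqr_ge0.
have W0 : 0 <= W.
  apply: (sup_bnd K0 _).1 => y [p hp <-]; split; [exact: normc_ge0 | exact: STb].
have Wub : forall p : P H, hnorm (ip2 ip) p = 1 ->
    ComplexField.Normc.normc (ip2 ip (TT p) p) <= W.
  move=> p hp; apply: (@sup_ge _ _ K); last by exists p.
  by move=> y [q hq <-]; apply: STb.
have hW : forall p : P H, `|ip2 ip (TT p) p| <= W%:C * ip2 ip p p.
  apply: (unit_to_all (hlin2 hip) (hsym2 hip) (hpos2 hip) (hdef2 hip) TTlin).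
    by rewrite lecR.
  move=> q hq; rewrite normcE' lecR; apply: Wub.
  by rewrite /hnorm hq /= sqrtr1.
have k0 : (0 < 2 * n)%N by rewrite muln_gt0.
have PI := power_ineq (hlin2 hip) (hsym2 hip) (hpos2 hip) TTlin.
have main : forall p : P H, ip2 ip p p = 1 ->
    ComplexField.Normc.normc (ip2 ip (iter (2 * n) TT p) p) <= W ^+ (2 * n).
  move=> p hp.
  have [Wp|Wz] : 0 < W \/ W = 0.
    by move: W0; rewrite le_eqVlt => /orP[/eqP ->|->]; [right|left].
    have := PI W%:C (2 * n)%N p; rewrite ltcR => /(_ Wp hW k0).
    by rewrite hp mulr1 -rmorphXn normcE' lecR.
  set nc := ComplexField.Normc.normc _.
  have hd : forall d, 0 < d -> d <= 1 -> nc <= d.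
    move=> d d0 d1.
    have := PI d%:C (2 * n)%N p; rewrite ltcR => /(_ d0).
    have hy : forall y, `|ip2 ip (TT y) y| <= d%:C * ip2 ip y y.
      move=> y; apply: le_trans (hW y) _; rewrite Wz mul0r.
      by apply: mulr_ge0 (hpos2 hip y); rewrite lecR ltW.
    move=> /(_ hy k0); rewrite hp mulr1 -rmorphXn normcE' lecR => h.
    apply: le_trans h _.
    case: (2 * n)%N k0 => // k _.
    rewrite exprS -[X in _ <= X]mulr1 ler_pM2l //.
    exact: exprn_ile1 (ltW d0) d1.
  rewrite Wz expr0n gtn_eqF // mulr0n.
  rewrite leNgt; apply/negP => nc0.
  have := hd (nc / (nc + 1)).
  rewrite divr_gt0 ?addr_gt0 // ler_pdivrMr ?addr_gt0 // mul1r lerDl ler01.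
  rewrite ler_pdivlMr ?addr_gt0 // => /(_ isT isT) h.
  exact: aux nc0 h.
have iterAB : forall m x, iter (2 * m) TT (x, 0) = (iter m (A \o B) x, 0).
  move=> m x; elim: m => [|m IH] //.
  have -> : (2 * m.+1 = (2 * m).+2)%N by rewrite mulnS.
  by rewrite /= IH /TT /offdiag /= ?A0 ?B0.
have iterBA : forall m x, iter (2 * m) TT (0, x) = (0, iter m (B \o A) x).
  move=> m x; elim: m => [|m IH] //.
  have -> : (2 * m.+1 = (2 * m).+2)%N by rewrite mulnS.
  by rewrite /= IH /TT /offdiag /= ?B0 ?A0.
have ip00 : ip 0 0 = 0 := ip0l (hlin hip) 0.
have unit1 : forall x, hnorm ip x = 1 -> ip x x = 1.
  by move=> x hx; rewrite (ipxx hip) hx expr1n.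
have bAB : forall x, hnorm ip x = 1 ->
    ComplexField.Normc.normc (ip (iter n (A \o B) x) x) <= W ^+ (2 * n).
  move=> x hx; have := main (x, 0); rewrite iterAB /ip2 /= ip00 !addr0.
  by move=> h; apply: h; apply: unit1.
have bBA : forall x, hnorm ip x = 1 ->
    ComplexField.Normc.normc (ip (iter n (B \o A) x) x) <= W ^+ (2 * n).
  move=> x hx; have := main (0, x); rewrite iterBA /ip2 /= ip00 !add0r.
  by move=> h; apply: h; apply: unit1.
have Wk0 : 0 <= W ^+ (2 * n) by rewrite exprn_ge0.
have [sAB0 sABle] : 0 <= numrad ip (iter n (A \o B)) /\ numrad ip (iter n (A \o B)) <= W ^+ (2 * n).
  by apply: sup_bnd => // y [x hx <-]; split; [exact: normc_ge0 | exact: bAB].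
have [sBA0 sBAle] : 0 <= numrad ip (iter n (B \o A)) /\ numrad ip (iter n (B \o A)) <= W ^+ (2 * n).
  by apply: sup_bnd => // y [x hx <-]; split; [exact: normc_ge0 | exact: bBA].
set M := Num.max _ _.
have M0 : 0 <= M by rewrite le_max sAB0.
have MW : M <= W ^+ (2 * n) by rewrite ge_max sABle sBAle.
have := ge0_ler_powR (r := (2 * n)%:R^-1) _ M0 Wk0 MW.
have i0 : 0 <= ((2 * n)%:R : R)^-1 by rewrite invr_ge0 ler0n.
move/(_ i0) => h.
apply: (le_trans h).
rewrite -powR_mulrn // -powRrM mulfV ?powRr1 //.
by rewrite pnatr_eq0 -lt0n.
Qed.
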